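(* The Lie algebra $\Lambda(\mathbb{Q}\mathrm{Tree}_2^-)$ is not finitely generated.
   Context: A nonsymmetric operad of sets $\mathcal{C}$ consists of sets $\mathcal{C}((m))$, $m\ge 0$, a unit $1\in\mathcal{C}((1))$, and partial compositions $c\circ_s d\in\mathcal{C}((k+j-1))$ for $c\in\mathcal{C}((k))$, $1\le s\le k$, $d\in\mathcal{C}((j))$, satisfying the usual associativity and unit axioms. Write $\mathbb{Q}\mathcal{C}((m))$ for the free $\mathbb{Q}$-vector space on $\mathcal{C}((m))$. The Lie algebra $\Lambda(\mathbb{Q}\mathcal{C})=\bigoplus_{m\ge0}\mathbb{Q}\mathcal{C}((m))$ has bracket, for $c\in\mathcal{C}((k))$, $d\in\mathcal{C}((j))$, $[c,d]=\sum_{t=1}^{j} d\circ_t c-\sum_{s=1}^{k} c\circ_s d$, extended bilinearly. $\mathrm{Tree}_2((m))$, $m\ge1$, is the set of planar binary rooted trees with one root at the bottom and $m$ leaves at the top labeled $1,\dots,m$ from left to right (each internal vertex has exactly two inputs); equivalently, full parenthesizations of the word $12\cdots m$, e.g. $\mathrm{Tree}_2((1))=\{1\}$ (trivial tree), $\mathrm{Tree}_2((2))=\{(12)\}$, $\mathrm{Tree}_2((3))=\{((12)3),(1(23))\}$. The composition $S\circ_i T$ grafts the root of $T$ onto the $i$-th leaf of $S$. For $c\in\mathrm{Tree}_2((m))$, $m\ge2$, the face $\partial_i c\in\mathrm{Tree}_2((m-1))$ is obtained by erasing the $i$-th leaf (and suppressing the resulting vertex with one input), e.g. $\partial_i((12)3)=\partial_i(1(23))=(12)$.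 The nonsymmetric operad $\mathrm{Tree}_2^-$ has $\mathrm{Tree}_2^-((0))=\{\circ\}$ a singleton, $\mathrm{Tree}_2^-((m))=\mathrm{Tree}_2((m))$ for $m\ge1$, with the grafting compositions and additionally $c\circ_i\circ=\partial_i c$ for $m\ge2$ and $1\circ_1\circ=\circ$. *)

(* Defs.v *)
(* with multinomials' monoid algebras {malg R[K]} used as
   the free Q-vector space on a (choice) type K. *)
From HB Require Import structures.
From mathcomp Require Import all_boot all_order all_algebra.
From mathcomp Require Import finmap.
From mathcomp.multinomials Require Import monalg.

Set Implicit Arguments.
Unset Strict Implicit.
Unset Printing Implicit Defensive.
Import GRing.Theory.
Local Open Scope ring_scope.

(* Planar binary rooted trees; Leaf is the trivial tree 1 (one leaf). *)
Inductive btree : Type := Leaf | Node of btree & btree.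

Fixpoint btree_enc (t : btree) : GenTree.tree unit :=
  match t with
  | Leaf => GenTree.Leaf tt
  | Node l r => GenTree.Node 0 [:: btree_enc l; btree_enc r]
  end.

Fixpoint btree_dec (g : GenTree.tree unit) : option btree :=
  match g with
  | GenTree.Leaf _ => Some Leaf
  | GenTree.Node _ [:: a; b] =>
      match btree_dec a, btree_dec b with
      | Some l, Some r => Some (Node l r)
      | _, _ => None
      end
  | GenTree.Node _ _ => None
  end.

Lemma btree_encK : pcancel btree_enc btree_dec.
Proof. by elim=> [|l IHl r IHr] //=; rewrite IHl IHr. Qed.

HB.instance Definition _ := Countable.copy btree (pcan_type btree_encK).

Fixpoint leaves (t : btree) : nat :=
  match t with Leaf => 1%N | Node l r => (leaves l + leaves r)%N end.

(* graft t d s : graft the root of d onto the s-th leaf (1-based) of t *)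
Fixpoint graft (t : btree) (s : nat) (d : btree) : btree :=
  match t with
  | Leaf => d
  | Node l r =>
      if (s <= leaves l)%N then Node (graft l s d) r
      else Node l (graft r (s - leaves l) d)
  end.

(* erase the s-th leaf (1-based) of t and suppress the resulting unary
   vertex; erasing the only leaf of the trivial tree gives None (= the
   nullary element of Tree_2^-). For t with >= 2 leaves this is the face. *)
Fixpoint erase (t : btree) (s : nat) : option btree :=
  match t with
  | Leaf => None
  | Node l r =>
      if (s <= leaves l)%N then
        match erase l s with None => Some r | Some l' => Some (Node l' r) end
      else
        match erase r (s - leaves l) with
        | None => Some l | Some r' => Some (Node l r') end
  end.

(* Operations of the nonsymmetric operad Tree_2^- :
   None = the nullary element (circle), Some t = a tree with leaves t inputs. *)
Definition top := option btree.

Definition tarity (c : top) : nat :=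
  match c with None => 0%N | Some t => leaves t end.

(* partial composition c o_s d  (meaningful for 1 <= s <= tarity c) *)
Definition tcomp (c : top) (s : nat) (d : top) : top :=
  match c with
  | None => None
  | Some t => match d with
              | Some u => Some (graft t s u)
              | None => erase t s
              end
  end.

Definition Lam := {malg rat[top]}.

Definition brb (c d : top) : Lam :=
  \sum_(1 <= t < (tarity d).+1) << tcomp d t c >>
  - \sum_(1 <= s < (tarity c).+1) << tcomp c s d >>.

Definition lbracket (x y : Lam) : Lam :=
  \sum_(a <- msupp x) \sum_(b <- msupp y) (x@_a * y@_b) *: brb a b.

Inductive lie_gen (S : seq Lam) : Lam -> Prop :=
  | lg_base x : x \in S -> lie_gen S x
  | lg_zero : lie_gen S 0
  | lg_add x y : lie_gen S x -> lie_gen S y -> lie_gen S (x + y)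
  | lg_scale (a : rat) x : lie_gen S x -> lie_gen S (a *: x)
  | lg_br x y : lie_gen S x -> lie_gen S y -> lie_gen S (lbracket x y).

Definition lie_fin_gen : Prop := exists S : seq Lam, forall x : Lam, lie_gen S x.

(* Main.v *)
Require Import Defs.
From HB Require Import structures.
From mathcomp Require Import all_boot all_order all_algebra.
From mathcomp Require Import finmap.
From mathcomp.multinomials Require Import monalg.
From mathcomp Require Import zify ring.
Set Implicit Arguments. Unset Strict Implicit. Unset Printing Implicit Defensive.
Import GRing.Theory.

Lemma leaves_gt0 t : (0 < leaves t)%N.
Proof. elim: t => //= l IH r _; lia. Qed.

Lemma leaves_graft b t a : leaves (graft b t a) = (leaves b + leaves a - 1)%N.
Proof.
elim: b t => [|l IHl r IHr] t /=; first lia.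
have := leaves_gt0 a; have := leaves_gt0 l; have := leaves_gt0 r.
case: ifP => _ /=; [rewrite IHl | rewrite IHr]; lia.
Qed.

Lemma erase_None b s : erase b s = None -> b = Leaf.
Proof.
case: b => //= l r; case: ifP; [case: (erase l s) | case: (erase r _)] => //.
Qed.

Lemma tarity_erase b s : tarity (erase b s) = (leaves b).-1.
Proof.
elim: b s => [|l IHl r IHr] s //=.
have := leaves_gt0 l; have := leaves_gt0 r.
case: ifP => _.
  case E: (erase l s) => [l'|] /=.
    by have := IHl s; rewrite E /= => ->; lia.
  by rewrite (erase_None E) /=; lia.
case E: (erase r _) => [r'|] /=.
  by have := IHr (s - leaves l)%N; rewrite E /= => ->; lia.
by rewrite (erase_None E) /=; lia.
Qed.

Lemma graft_leaf b t : graft b t Leaf = b.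
Proof. by elim: b t => [|l IHl r IHr] t //=; case: ifP => _; rewrite ?IHl ?IHr. Qed.

Lemma erase_graft_lt b a t u : (1 <= u)%N -> (u < t)%N -> (t <= leaves b)%N ->
  erase (graft b t a) u = tcomp (erase b u) t.-1 (Some a).
Proof.
elim: b t u => [|l IHl r IHr] t u /=; first lia.
move=> h1 h2 h3; have := leaves_gt0 l; have := leaves_gt0 r; have := leaves_gt0 a.
move=> ha hr hl.
case: (leqP t (leaves l)) => htl.
  rewrite /= leaves_graft ifT; last lia.
  rewrite IHl //. rewrite ifT; last lia.
  case E: (erase l u) => [l'|] /=; last by move: (erase_None E) htl h2 h1 => -> /=; lia.
  have := tarity_erase l u; rewrite E /= => hl'.
  by rewrite ifT //; lia.
rewrite /=.
case: (leqP u (leaves l)) => hul.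
  case E: (erase l u) => [l'|] /=.
    have := tarity_erase l u; rewrite E /= => hl'.
    rewrite ifF; last lia. do 3 f_equal; lia.
  move: (erase_None E) => El; subst l; do 3 f_equal; rewrite /=; lia.
rewrite IHr; [|lia|lia|lia].
case E: (erase r (u - leaves l)) => [r'|] /=.
  have := tarity_erase r (u - leaves l)%N; rewrite E /= => hr'.
  rewrite ifF; last lia. do 3 f_equal; lia.
move: (erase_None E) => Er; subst r; move: h3 => /=; lia.
Qed.


Lemma erase_graft_mid b a t s : (1 <= t <= leaves b)%N -> (1 <= s <= leaves a)%N ->
  erase (graft b t a) (t + s - 1) = tcomp (Some b) t (erase a s).
Proof.
elim: b t => [|l IHl r IHr] t /=.
  move=> ht hs; have -> : t = 1%N by lia.
  rewrite add1n subn1 /=; by case: (erase a s).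
move=> ht hs; have := leaves_gt0 l; have := leaves_gt0 r; have := leaves_gt0 a.
move=> ha hr hl.
case: (leqP t (leaves l)) => htl.
  rewrite /= leaves_graft ifT; last lia.
  rewrite IHl; last lia; last lia.
  case E: (erase a s) => [a'|] //=; by rewrite htl.
rewrite /= ifF; last lia.
have -> : (t + s - 1 - leaves l = (t - leaves l) + s - 1)%N by lia.
rewrite IHr; [|lia|lia].
case E: (erase a s) => [a'|] //=; rewrite ifF //; lia.
Qed.

Lemma erase_graft_gt b a t x : (1 <= t)%N -> (t < x)%N -> (x <= leaves b)%N ->
  erase (graft b t a) (x + leaves a - 1) = tcomp (erase b x) t (Some a).
Proof.
elim: b t x => [|l IHl r IHr] t x; first by rewrite /=; lia.
move=> h1 h2 h3; simpl in h3; have := leaves_gt0 l; have := leaves_gt0 r; have := leaves_gt0 a.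
move=> ha hr hl.
case: (leqP t (leaves l)) => htl.
  have -> : graft (Node l r) t a = Node (graft l t a) r by rewrite /= htl.
  rewrite /= leaves_graft.
  case: (leqP x (leaves l)) => hxl.
    rewrite ifT; last lia.
    rewrite IHl //.
    case E: (erase l x) => [l'|] /=; last by move: (erase_None E) hxl h2 h1 => -> /=; lia.
    have := tarity_erase l x; rewrite E /= => hl'.
    by rewrite ifT //; lia.
  rewrite ifF; last lia.
  have -> : (x + leaves a - 1 - (leaves l + leaves a - 1) = x - leaves l)%N by lia.
  case E: (erase r (x - leaves l)) => [r'|] /=.
    by rewrite ifT.
  by [].
have -> : graft (Node l r) t a = Node l (graft r (t - leaves l) a).
  by rewrite /= ifF //; apply/negbTE; rewrite -ltnNge.
rewrite /= ifF; last lia.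
rewrite ifF; last lia.
have -> : (x + leaves a - 1 - leaves l = (x - leaves l) + leaves a - 1)%N by lia.
rewrite IHr; [|lia|lia|lia].
case E: (erase r (x - leaves l)) => [r'|] /=.
  have := tarity_erase r (x - leaves l)%N; rewrite E /= => hr'.
  rewrite ifF; last lia. do 3 f_equal; lia.
move: (erase_None E) => Er; subst r; move: h3 h2 htl => /=; lia.
Qed.

Fixpoint lcomb (t : btree) : bool :=
  match t with Leaf => true | Node l r => lcomb l && (r == Leaf) end.

Lemma graft_neq_leaf r s a : a != Leaf -> (graft r s a == Leaf) = false.
Proof. by case: r => [|l r] /= ha; [apply/negbTE | case: ifP]. Qed.

Lemma lcomb_graft b t a : (1 <= t <= leaves b)%N -> a != Leaf ->
  lcomb (graft b t a) = [&& lcomb b, lcomb a & t == 1%N].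
Proof.
elim: b t => [|l IHl r IHr] t /=.
  move=> ht _; have -> : t = 1%N by lia. by rewrite andbT.
move=> ht ha; have := leaves_gt0 l.
case: ifP => htl /= hl.
  rewrite IHl //; last lia.
  by case: (lcomb l); case: (r == Leaf); case: (lcomb a); case: (t == 1%N).
rewrite graft_neq_leaf // andbF.
have -> : (t == 1%N) = false by apply/eqP; lia.
by rewrite !andbF.
Qed.

Local Open Scope ring_scope.


Definition lin (F : top -> Lam) (x : Lam) : Lam := \sum_(a <- msupp x) x@_a *: F a.

Lemma linEw F x (d : {fset top}) : (msupp x `<=` d)%fset ->
  lin F x = \sum_(a <- d) x@_a *: F a.
Proof.
move=> le; rewrite /lin (big_fset_incl _ le) //= => a _ /mcoeff_outdom ->.
by rewrite scale0r.
Qed.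

Lemma linD F x y : lin F (x + y) = lin F x + lin F y.
Proof.
set d := (msupp x `|` msupp y)%fset.
rewrite (@linEw F (x + y) d) ?msuppD_le // (@linEw F x d) ?fsubsetUl //.
rewrite (@linEw F y d) ?fsubsetUr // -big_split /=.
by apply: eq_bigr => a _; rewrite mcoeffD scalerDl.
Qed.

Lemma linZ F c x : lin F (c *: x) = c *: lin F x.
Proof.
rewrite (@linEw F (c *: x) (msupp x)) ?msuppZ_le // /lin scaler_sumr.
by apply: eq_bigr => a _; rewrite mcoeffZ scalerA.
Qed.

Lemma lin0 F : lin F 0 = 0.
Proof. by rewrite /lin msupp0 big_nil. Qed.

Lemma linN F x : lin F (- x) = - lin F x.
Proof. by rewrite -scaleN1r linZ scaleN1r. Qed.

Lemma linB F x y : lin F (x - y) = lin F x - lin F y.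
Proof. by rewrite linD linN. Qed.

Lemma lin_sum F I (r : seq I) (g : I -> Lam) :
  lin F (\sum_(i <- r) g i) = \sum_(i <- r) lin F (g i).
Proof. exact: (big_morph _ (linD F) (lin0 F)). Qed.

Lemma linU F c : lin F << c >> = F c.
Proof.
rewrite (@linEw F _ [fset c]%fset) ?msuppU_le // big_seq_fset1 mcoeffUU.
by rewrite scale1r.
Qed.

Lemma lin_ext F G x : (forall a, F a = G a) -> lin F x = lin G x.
Proof. by move=> e; rewrite /lin; apply: eq_bigr => a _; rewrite e. Qed.

Lemma lin_fD F G x : lin (fun a => F a + G a) x = lin F x + lin G x.
Proof. by rewrite /lin -big_split; apply: eq_bigr => a _; rewrite scalerDr. Qed.

Lemma lin_fZ F c x : lin (fun a => c *: F a) x = c *: lin F x.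
Proof. by rewrite /lin scaler_sumr; apply: eq_bigr => a _; rewrite !scalerA mulrC. Qed.

Lemma lin_f0 x : lin (fun _ => 0) x = 0.
Proof. by rewrite /lin big1 // => a _; rewrite scaler0. Qed.

Lemma lin_fN F x : lin (fun a => - F a) x = - lin F x.
Proof.
by rewrite -scaleN1r -lin_fZ; apply: lin_ext => a; rewrite scaleN1r.
Qed.

Lemma lin_fB F G x : lin (fun a => F a - G a) x = lin F x - lin G x.
Proof. by rewrite lin_fD lin_fN. Qed.

Lemma lin_fsum I (F : I -> top -> Lam) (r : seq I) x :
  lin (fun a => \sum_(i <- r) F i a) x = \sum_(i <- r) lin (F i) x.
Proof.
elim: r => [|i r IH].
  transitivity (lin (fun _ => 0) x); first by apply: lin_ext => a; rewrite big_nil.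
  by rewrite lin_f0 big_nil.
rewrite big_cons -IH -lin_fD; apply: lin_ext => a; by rewrite big_cons.
Qed.

Lemma lin_coef F x k : (lin F x)@_k = \sum_(a <- msupp x) x@_a * (F a)@_k.
Proof. by rewrite /lin raddf_sum; apply: eq_bigr => a _; rewrite /= mcoeffZ. Qed.

Lemma mcoeffU1' (c k : top) : (<< c >> : Lam)@_k = (c == k)%:R.
Proof. by rewrite mcoeffU. Qed.

Lemma lin_id x : lin (fun a => << a >>) x = x.
Proof.
apply/malgP => k; rewrite lin_coef.
case: (boolP (k \in msupp x)) => hk.
  rewrite (big_fsetD1 k) //= mcoeffU1' eqxx mulr1 big1_fset ?addr0 // => a.
  by rewrite in_fsetD1 mcoeffU1' => /andP [/negbTE -> _] _; rewrite mulr0.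
rewrite (mcoeff_outdom hk) big1_fset // => a ha _.
rewrite mcoeffU1'; case: eqP => [e|_]; last by rewrite mulr0.
by subst a; rewrite ha in hk.
Qed.

Lemma lin_linear (f : Lam -> Lam) :
  (forall x y, f (x + y) = f x + f y) -> (forall c x, f (c *: x) = c *: f x) ->
  forall y, f y = lin (fun b => f << b >>) y.
Proof.
move=> fD fZ y; rewrite -{1}(lin_id y) /lin.
have f0 : f 0 = 0 by have := fZ 0 0; rewrite !scale0r.
rewrite (big_morph f fD f0); apply: eq_bigr => a _.
by rewrite fZ.
Qed.

Lemma sum_ind (x : Lam) c : \sum_(a <- msupp x) x@_a * (a == c)%:R = x@_c.
Proof.
have := congr1 (mcoeff c) (lin_id x); rewrite lin_coef => <-.
by apply: eq_bigr => a _; rewrite mcoeffU1'.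
Qed.


Lemma dsum (V : zmodType) (F : nat -> nat -> V) j :
  \sum_(1 <= t < j.+1) (\sum_(1 <= u < t) F u t.-1 + \sum_(t.+1 <= x < j.+1) F x t)
  = \sum_(1 <= x < j.+1) \sum_(1 <= y < j) F x y.
Proof.
elim: j => [|j IH]; first by rewrite !big_geq.
case: (posnP j) => [-> | jpos].
  by rewrite !big_nat1 !big_geq // addr0.
rewrite (big_nat_recr j.+1) //=.
rewrite (@big_geq _ _ _ j.+2 j.+2) // addr0.
rewrite (@eq_big_nat _ _ _ 1 j.+1 _
   (fun t => (\sum_(1 <= u < t) F u t.-1 + \sum_(t.+1 <= x < j.+1) F x t) + F j.+1 t)); last first.
  move=> t /andP [h1 h2]; rewrite [in LHS](big_nat_recr j.+1) //= addrA //.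
rewrite big_split /= IH.
rewrite (big_nat_recr j.+1) //=.
rewrite (@eq_big_nat _ _ _ 1 j.+1 (fun x => \sum_(1 <= y < j.+1) F x y)
   (fun x => \sum_(1 <= y < j) F x y + F x j)); last first.
  by move=> x /andP [h1 h2]; rewrite (@big_nat_recr _ _ _ j 1).
rewrite big_split /=.
by rewrite -!addrA [X in _ + X]addrC.
Qed.


Definition fD (c : top) : Lam := \sum_(1 <= u < (tarity c).+1) << tcomp c u None >>.

Lemma brbN c : brb None c = fD c.
Proof. by rewrite /brb /= (@big_geq _ _ _ 1 1) // subr0. Qed.

Lemma brbN' c : brb c None = - fD c.
Proof. by rewrite /brb /= (@big_geq _ _ _ 1 1) // sub0r. Qed.

Lemma shiftS (V : zmodType) m n a (F : nat -> V) :
  \sum_((m + a)%N <= i < (n + a)%N) F i = \sum_(m <= i < n) F (i + a)%N.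
Proof. by rewrite big_addn addnK. Qed.

Lemma Xlem a b :
  \sum_(1 <= t < (tarity b).+1) fD (tcomp b t a) =
  \sum_(1 <= t < (tarity b).+1) \sum_(1 <= s < (tarity a).+1) << tcomp b t (tcomp a s None) >> +
  \sum_(1 <= t < (tarity b).+1) \sum_(1 <= t' < (tarity (tcomp b t None)).+1)
        << tcomp (tcomp b t None) t' a >>.
Proof.
case: b => [β|]; last by rewrite /= !big_geq // addr0.
case: a => [α|]; last first.
  rewrite /= [X in _ = X + _](eq_bigr (fun _ => 0)); last by move=> t _; rewrite big_geq.
  by rewrite big1_eq add0r.
rewrite /=.
set j := leaves β; set k := leaves α.
have hj : (0 < j)%N by apply: leaves_gt0.
have hk : (0 < k)%N by apply: leaves_gt0.
have eqk : leaves α = k by []. have eqj : leaves β = j by [].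
clearbody j k.
pose F x y : Lam := << tcomp (erase β x) y (Some α) >>.
rewrite (@eq_big_nat _ _ _ 1 j.+1 _ (fun t =>
   \sum_(1 <= s < k.+1) << tcomp (Some β) t (erase α s) >> +
   (\sum_(1 <= u < t) F u t.-1 + \sum_(t.+1 <= x < j.+1) F x t))); last first.
  move=> t /andP [h1 h2].
  rewrite /fD /= leaves_graft eqj eqk.
  have -> : ((j + k - 1).+1 = j + k)%N by lia.
  rewrite (@big_cat_nat _ _ _ t) //; last lia.
  rewrite [X in _ + X = _](@big_cat_nat _ _ _ (t + k)) ?leq_addr //; last lia.
  rewrite addrCA; congr (_ + _).
    transitivity (\sum_((1 + t.-1)%N <= u < (k.+1 + t.-1)%N) (<< erase (graft β t α) u >> : Lam)).
      by congr (\sum_(_ <= _ < _) _); lia.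
    rewrite shiftS; apply: eq_big_nat => s /andP [s1 s2].
    have -> : (s + t.-1 = t + s - 1)%N by lia.
    by rewrite erase_graft_mid //; lia.
  congr (_ + _).
    rewrite (@eq_big_nat _ _ _ 1 t _ (fun u => F u t.-1)) //.
    move=> u /andP [u1 u2]; rewrite /F erase_graft_lt //; lia.
  transitivity (\sum_((t.+1 + k.-1)%N <= u < (j.+1 + k.-1)%N) (<< erase (graft β t α) u >> : Lam)).
    by congr (\sum_(_ <= _ < _) _); lia.
  rewrite shiftS; apply: eq_big_nat => x /andP [x1 x2].
  have -> : (x + k.-1 = x + leaves α - 1)%N by rewrite eqk; lia.
  by rewrite erase_graft_gt //; lia.
rewrite big_split /= dsum; congr (_ + _).
apply: eq_big_nat => t /andP [t1 t2].
rewrite tarity_erase eqj prednK //.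
Qed.


Lemma lin_comp (f : Lam -> Lam) :
  (forall x y, f (x + y) = f x + f y) -> (forall c x, f (c *: x) = c *: f x) ->
  forall G x, f (lin G x) = lin (fun a => f (G a)) x.
Proof.
move=> fD fZ G x; rewrite /lin.
have f0 : f 0 = 0 by have := fZ 0 0; rewrite !scale0r.
rewrite (big_morph f fD f0); apply: eq_bigr => a _; by rewrite fZ.
Qed.

Lemma lbracketE x y : lbracket x y = lin (fun a => lin (brb a) y) x.
Proof.
rewrite /lbracket /lin; apply: eq_bigr => a _; rewrite scaler_sumr.
by apply: eq_bigr => b _; rewrite scalerA.
Qed.

Lemma brDl x x' y : lbracket (x + x') y = lbracket x y + lbracket x' y.
Proof. by rewrite !lbracketE linD. Qed.
Lemma brZl c x y : lbracket (c *: x) y = c *: lbracket x y.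
Proof. by rewrite !lbracketE linZ. Qed.
Lemma brDr x y y' : lbracket x (y + y') = lbracket x y + lbracket x y'.
Proof. by rewrite !lbracketE -lin_fD; apply: lin_ext => a; rewrite linD. Qed.
Lemma brZr c x y : lbracket x (c *: y) = c *: lbracket x y.
Proof. by rewrite !lbracketE -lin_fZ; apply: lin_ext => a; rewrite linZ. Qed.
Lemma brU a b : lbracket << a >> << b >> = brb a b.
Proof. by rewrite lbracketE !linU. Qed.
Lemma br0l y : lbracket 0 y = 0.
Proof. by have := brZl 0 0 y; rewrite !scale0r. Qed.
Lemma br0r x : lbracket x 0 = 0.
Proof. by have := brZr 0 x 0; rewrite !scale0r. Qed.
Lemma br_sumL I (r : seq I) (g : I -> Lam) y :
  lbracket (\sum_(i <- r) g i) y = \sum_(i <- r) lbracket (g i) y.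
Proof. exact: (big_morph (fun x => lbracket x y) (fun x x' => brDl x x' y) (br0l y)). Qed.
Lemma br_sumR I (r : seq I) (g : I -> Lam) x :
  lbracket x (\sum_(i <- r) g i) = \sum_(i <- r) lbracket x (g i).
Proof. exact: (big_morph (fun y => lbracket x y) (brDr x) (br0r x)). Qed.

Definition D (x : Lam) := lbracket << None >> x.

Lemma DE x : D x = lin (brb None) x.
Proof. by rewrite /D lbracketE linU. Qed.
Lemma DD x y : D (x + y) = D x + D y.
Proof. exact: brDr. Qed.
Lemma DZ c x : D (c *: x) = c *: D x.
Proof. exact: brZr. Qed.
Lemma DU c : D << c >> = fD c.
Proof. by rewrite DE linU brbN. Qed.

Lemma abcd (V : zmodType) (p1 p2 q1 q2 : V) :
  (p1 + p2) - (q1 + q2) = (p1 - q2) + (p2 - q1).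
Proof. by rewrite opprD [- q1 - q2]addrC addrACA. Qed.

Lemma leib_basis a b :
  D (brb a b) = lbracket (D << a >>) << b >> + lbracket << a >> (D << b >>).
Proof.
rewrite DE {2}/brb linB !lin_sum.
rewrite (eq_bigr (fun t => fD (tcomp b t a))); last by move=> t _; rewrite linU brbN.
rewrite [X in _ - X = _](eq_bigr (fun s => fD (tcomp a s b))); last by move=> s _; rewrite linU brbN.
rewrite Xlem Xlem !DU /fD br_sumL br_sumR.
rewrite [X in _ = X + _](eq_bigr (fun s => brb (tcomp a s None) b)); last by move=> s _; rewrite brU.
rewrite [X in _ = _ + X](eq_bigr (fun t => brb a (tcomp b t None))); last by move=> t _; rewrite brU.
rewrite /brb !sumrB [X in _ = X - _ + _]exchange_big_nat.
rewrite [X in _ = _ + (_ - X)]exchange_big_nat.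
exact: abcd.
Qed.

Lemma leib x y : D (lbracket x y) = lbracket (D x) y + lbracket x (D y).
Proof.
have fl : forall y, (fun x => lbracket x y) =1 (fun x => lin (fun a => lbracket << a >> y) x).
  move=> z x'; exact: (lin_linear (fun x => brDl x ^~ z) (fun c x => brZl c x z)).
have fr : forall x, (fun y => lbracket x y) =1 (fun y => lin (fun b => lbracket x << b >>) y).
  move=> z y'; exact: (lin_linear (brDr z) (fun c y => brZr c z y)).
have Dl : forall G x, D (lin G x) = lin (fun a => D (G a)) x by exact: lin_comp DD DZ.
have BLl : forall z G x, lbracket (lin G x) z = lin (fun a => lbracket (G a) z) x.
  move=> z; exact: (lin_comp (fun x x' => brDl x x' z) (fun c x => brZl c x z)).
have BLr : forall z G x, lbracket z (lin G x) = lin (fun a => lbracket z (G a)) x.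
  move=> z; exact: (lin_comp (brDr z) (fun c y => brZr c z y)).
have DL : forall x, D x = lin (fun a => D << a >>) x by exact: lin_linear DD DZ.
rewrite fl Dl (DL x) BLl fl -lin_fD; apply: lin_ext => a.
rewrite (fr << a >> y) Dl (DL y) BLr (fr (D << a >>)) -lin_fD; apply: lin_ext => b.
by rewrite brU leib_basis.
Qed.


Fixpoint comb (n : nat) : btree :=
  match n with 0 => Leaf | n'.+1 => Node (comb n') Leaf end.

Lemma leaves_comb n : leaves (comb n) = n.+1.
Proof. by elim: n => //= n ->; rewrite addn1. Qed.

Lemma lcomb_comb n : lcomb (comb n).
Proof. by elim: n => //= n ->. Qed.

Lemma comb_eq t n : (t == comb n) = lcomb t && (leaves t == n.+1)%N.
Proof.
apply/eqP/andP => [-> | [h1 /eqP h2]]; first by rewrite lcomb_comb leaves_comb.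
elim: t n h1 h2 => [|l IHl r _] n /=.
  by case: n.
move/andP => [hl /eqP hr]; subst r; rewrite addn1 => -[hn].
case: n hn => [|n] hn; first by have := leaves_gt0 l; lia.
by rewrite (IHl n hl hn).
Qed.

Lemma eqSome (x y : btree) : (Some x == Some y :> top) = (x == y).
Proof. by []. Qed.

Lemma NodeLeaf l r : (Node l r == Leaf) = false.
Proof. by apply/eqP. Qed.

Lemma sum_graft_lc (β α : btree) K : α != Leaf ->
  \sum_(1 <= t < (leaves β).+1) (<< Some (graft β t α) >> : Lam)@_(Some (comb K)) =
  (lcomb β && lcomb α && (leaves β + leaves α - 1 == K.+1)%N)%:R.
Proof.
move=> ha.
rewrite (@eq_big_nat _ _ _ 1 (leaves β).+1 _ (fun t =>
   ((lcomb β && lcomb α && (leaves β + leaves α - 1 == K.+1)%N) && (t == 1%N))%:R)).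
  rewrite big_ltn; last by rewrite ltnS leaves_gt0.
  rewrite eqxx andbT.
  rewrite big_nat_cond big1 ?addr0 //.
  move=> i /andP [/andP [hi1 _] _].
  have hi : (i == 1%N) = false by apply/negbTE; rewrite neq_ltn hi1 orbT.
  by rewrite hi andbF.
move=> t /andP [t1 t2]; rewrite mcoeffU1' eqSome comb_eq lcomb_graft //; last lia.
rewrite leaves_graft.
by case: (lcomb β); case: (lcomb α); case: (t == 1%N); case: (_ == K.+1).
Qed.

Ltac simp := rewrite ?(mul0r, mulr0, add0r, addr0, subr0, sub0r, mul1r, mulr1, oppr0, mulr0n, mul0rn, subrr).

Lemma brb_lc K a b : (0 < K)%N ->
  (brb a b)@_(Some (comb K)) =
  K%:R * ((a == Some Leaf)%:R * (b == Some (comb K))%:R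
          - (a == Some (comb K))%:R * (b == Some Leaf)%:R)
  + (a == None)%:R * (fD b)@_(Some (comb K))
  - (b == None)%:R * (fD a)@_(Some (comb K)).
Proof.
move=> hK.
have cK : (Leaf == comb K) = false by case: K hK.
case: a => [α|]; case: b => [β|].
- rewrite /brb /= mcoeffB !raddf_sum /= !eqSome.
  case: (eqVneq α Leaf) => [-> | ha].
    rewrite (eq_bigr (fun _ => (β == comb K)%:R)); last first.
      by move=> t _; rewrite mcoeffU1' eqSome graft_leaf.
    rewrite big_nat1 /= mcoeffU1' eqSome sumr_const_nat eq_sym cK.
    case: (boolP (β == comb K)) => [/eqP -> | hb].
      rewrite leaves_comb eqxx (eq_sym (comb K)) cK /= subn1 /= mulrS; simp; by rewrite addrC addrK.
    rewrite eq_sym (negbTE hb) /=; by simp.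
  rewrite ?(negbTE ha) /=.
  case: (eqVneq β Leaf) => [-> | hb].
    rewrite big_nat1 /= mcoeffU1' eqSome.
    rewrite [X in _ + X = _](eq_bigr (fun _ => - (α == comb K)%:R)); last first.
      by move=> t _; rewrite graft_leaf mcoeffU1' eqSome.
    rewrite sumr_const_nat /= eq_sym cK /=.
    case: (boolP (comb K == α)) => [/eqP e | h].
      have hl : (leaves α = K.+1)%N by rewrite -e leaves_comb.
      rewrite hl subn1 /= mulrS; simp; ring.
    rewrite /= mulr0n oppr0 mul0rn; by simp.
  rewrite sumrN (sum_graft_lc _ _ ha) (sum_graft_lc _ _ hb).
  rewrite [lcomb α && lcomb β]andbC [(leaves α + _)%N]addnC.
  by simp.
- rewrite brbN' /fD /= mcoeffN; by simp.
- rewrite brbN /fD /=; by simp.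
- rewrite brbN /fD /= big_geq // mcoeff0; by simp.
Qed.


Lemma Dcoef w k : (D w)@_k = \sum_(b <- msupp w) w@_b * (fD b)@_k.
Proof. by rewrite DE lin_coef; apply: eq_bigr => b _; rewrite brbN. Qed.

Lemma key K u v : (0 < K)%N ->
  u@_(Some (comb K)) = 0 -> v@_(Some (comb K)) = 0 ->
  (D u)@_(Some (comb K)) = 0 -> (D v)@_(Some (comb K)) = 0 ->
  (lbracket u v)@_(Some (comb K)) = 0.
Proof.
set c := Some (comb K).
move=> hK hu hv hDu hDv.
have inner : forall a, (lin (brb a) v)@_c =
    - (K%:R * v@_(Some Leaf)) * (a == c)%:R - v@_None * (fD a)@_c.
  move=> a; rewrite lin_coef.
  rewrite (eq_bigr (fun b => (K%:R * (a == Some Leaf)%:R) * (v@_b * (b == c)%:R)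
      - (K%:R * (a == c)%:R) * (v@_b * (b == Some Leaf)%:R)
      + (a == None)%:R * (v@_b * (fD b)@_c)
      - (fD a)@_c * (v@_b * (b == None)%:R))); last first.
    by move=> b _; rewrite brb_lc //; ring.
  rewrite sumrB big_split sumrB /= -!mulr_sumr !sum_ind -Dcoef hv hDv; ring.
rewrite lbracketE lin_coef.
rewrite (eq_bigr (fun a => - (K%:R * v@_(Some Leaf)) * (u@_a * (a == c)%:R)
     - v@_None * (u@_a * (fD a)@_c))); last first.
  by move=> a _; rewrite inner; ring.
rewrite sumrB -!mulr_sumr sum_ind -Dcoef hu hDu; ring.
Qed.


Definition low (K : nat) (x : Lam) := forall a, (K < tarity a)%N -> x@_a = 0.

Lemma tarity_tcompN b u : (tarity (tcomp b u None) <= tarity b)%N.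
Proof. case: b => [β|] //=; rewrite tarity_erase; exact: leq_pred. Qed.

Lemma low_D K x : low K x -> low K (D x).
Proof.
move=> hx a ha; rewrite Dcoef big1_seq // => b _.
case: (leqP (tarity b) K) => hb; last by rewrite hx // mul0r.
rewrite /fD raddf_sum big1 ?mulr0 // => u _ /=.
rewrite mcoeffU1'; case: eqP => // e.
have := tarity_tcompN b u; rewrite e; lia.
Qed.

Lemma iterD_add n x y : iter n D (x + y) = iter n D x + iter n D y.
Proof. by elim: n => //= n ->; rewrite DD. Qed.
Lemma iterD_Z n c x : iter n D (c *: x) = c *: iter n D x.
Proof. by elim: n => //= n ->; rewrite DZ. Qed.
Lemma iterD_0 n : iter n D 0 = 0.
Proof. by have := iterD_Z n 0 0; rewrite !scale0r. Qed.

Definition Mp K (x : Lam) := forall n, (iter n D x)@_(Some (comb K)) = 0.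

Lemma Mp_D K x : Mp K x -> Mp K (D x).
Proof. by move=> h n; rewrite -iterSr; apply: h. Qed.

Lemma Mp_br K x y : (0 < K)%N -> Mp K x -> Mp K y -> Mp K (lbracket x y).
Proof.
move=> hK hx hy n; elim: n x y hx hy => [|n IH] x y hx hy.
  by apply: key => //; [exact: (hx 0%N) | exact: (hy 0%N) | exact: (hx 1%N) | exact: (hy 1%N)].
by rewrite iterSr leib iterD_add mcoeffD (IH (D x) y (Mp_D hx) hy) (IH x (D y) hx (Mp_D hy)) addr0.
Qed.

Lemma low_Mp K x : low K x -> Mp K x.
Proof.
move=> h n; have : low K (iter n D x).
  by elim: n => //= n IH; apply: low_D.
by move=> hl; apply: hl => /=; rewrite leaves_comb.
Qed.

Theorem theorem5p1 :
  ~ (exists S : seq Lam, forall x : Lam, lie_gen S x).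
Proof.
move=> [S hS].
pose K := (\max_(s <- S) \max_(a <- msupp s) tarity a).+1.
have hK : (0 < K)%N by [].
have lowS : forall s, s \in S -> low K s.
  move=> s hs a ha; apply: mcoeff_outdom; apply/negP => hin.
  have h1 : (tarity a <= \max_(a <- msupp s) tarity a)%N.
    by apply: (@leq_bigmax_seq _ _ xpredT (fun a => tarity a)).
  have h2 : (\max_(a <- msupp s) tarity a <= \max_(s <- S) \max_(a <- msupp s) tarity a)%N.
    by apply: (@leq_bigmax_seq _ _ xpredT (fun s => \max_(a <- msupp s) tarity a)).
  rewrite /K in ha; lia.
have gen : forall x, lie_gen S x -> Mp K x.
  move=> x; elim => {x}.
  - by move=> x hx; apply: low_Mp; apply: lowS.
  - by move=> n; rewrite iterD_0 mcoeff0.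
  - by move=> x y _ hx _ hy n; rewrite iterD_add mcoeffD hx hy addr0.
  - by move=> c x _ hx n; rewrite iterD_Z mcoeffZ hx mulr0.
  - by move=> x y _ hx _ hy; apply: Mp_br.
have := gen _ (hS << Some (comb K) >>) 0%N.
by rewrite /= mcoeffU1' eqxx; apply/eqP; rewrite oner_eq0.
Qed.
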